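(* Let $n\ge1$ and let $t_1,\dots,t_{n+1}$ be real nodes with $t_i\ne t_j$ for $i\ne j$. Let $L=(l_{i,j})_{1\le i,j\le n+1}$ be the collocation matrix of the Newton basis at these nodes, i.e. $l_{i,j}=\prod_{k=1}^{j-1}(t_i-t_k)$ (so $L$ is lower triangular). Then $$L=F_nF_{n-1}\cdots F_1D,$$ where $D=\mathrm{diag}(d_{1,1},\dots,d_{n+1,n+1})$ with $d_{i,i}=\prod_{k=1}^{i-1}(t_i-t_k)$, and for $i=1,\dots,n$, $F_i\in\mathbb R^{(n+1)\times(n+1)}$ is the lower bidiagonal matrix with ones on the diagonal, whose subdiagonal entries are $(F_i)_{r,r-1}=m_{r,r-i}$ for $r=i+1,\dots,n+1$ and $(F_i)_{r,r-1}=0$ for $r\le i$, all other entries being zero, where $$m_{i,j}=\prod_{k=1}^{j-1}\frac{t_i-t_{i-k}}{t_{i-1}-t_{i-k-1}},\qquad 1\le j<i\le n+1$$ (an empty product equals $1$).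
   Context: The Newton basis associated with nodes $t_1,\dots,t_{n+1}$ is $w_0(t)=1$, $w_i(t)=\prod_{k=1}^{i}(t-t_k)$, $i=1,\dots,n$; its collocation matrix at the nodes is $L=(w_{j-1}(t_i))_{1\le i,j\le n+1}$. *)

(* Defs.v *)
(* Nodes are a function t : nat -> R, used at 1-based indices 1..n+1
   as in the paper; matrix indices i : 'I_n.+1 correspond to paper index i+1. *)
From HB Require Import structures.
From mathcomp Require Import all_boot all_order all_algebra.
Set Implicit Arguments. Unset Strict Implicit. Unset Printing Implicit Defensive.
Import Order.TTheory GRing.Theory Num.Theory.
Local Open Scope ring_scope.

Section NewtonDefs.
Variables (R : realFieldType) (n : nat) (t : nat -> R).

Definition newtonL : 'M[R]_n.+1 :=
  \matrix_(i, j) \prod_(1 <= k < j.+1) (t i.+1 - t k).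

Definition newtonD : 'M[R]_n.+1 :=
  diag_mx (\row_i \prod_(1 <= k < i.+1) (t i.+1 - t k)).

Definition newton_m (i j : nat) : R :=
  \prod_(1 <= k < j) ((t i - t (i - k)%N) / (t i.-1 - t (i - k - 1)%N)).

(* With 0-based row r the paper row
   is r+1, and the condition r+1 >= p+1 is p <= r. *)
Definition newtonF (p : nat) : 'M[R]_n.+1 :=
  \matrix_(r, c)
    if r == c then 1
    else if (r == c.+1 :> nat) && (p <= r)%N then newton_m r.+1 (r.+1 - p)
    else 0.

End NewtonDefs.

(* Main.v *)
Require Import Defs.
From HB Require Import structures.
From mathcomp Require Import all_boot all_order all_algebra.
From mathcomp Require Import zify ring lra.
Import Order.TTheory GRing.Theory Num.Theory.
Local Open Scope ring_scope.

Section Aux.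
Variable R : realFieldType.

Definition Emx {n} (A : 'M[R]_n.+1) : 'M[R]_n.+2 :=
  \matrix_(i, j) match unlift ord0 i, unlift ord0 j with
                 | Some i', Some j' => A i' j'
                 | _, _ => (i == j)%:R end.

Lemma Emx00 n (A : 'M[R]_n.+1) : Emx A ord0 ord0 = 1.
Proof. by rewrite mxE unlift_none eqxx. Qed.
Lemma Emx0l n (A : 'M[R]_n.+1) j : Emx A ord0 (lift ord0 j) = 0.
Proof. by rewrite mxE unlift_none. Qed.
Lemma Emxl0 n (A : 'M[R]_n.+1) i : Emx A (lift ord0 i) ord0 = 0.
Proof. by rewrite mxE liftK unlift_none. Qed.
Lemma Emxll n (A : 'M[R]_n.+1) i j : Emx A (lift ord0 i) (lift ord0 j) = A i j.
Proof. by rewrite mxE !liftK. Qed.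

Lemma Emx_mul n (A B : 'M[R]_n.+1) : Emx (A * B) = Emx A * Emx B.
Proof.
apply/matrixP => i j; rewrite -!mulmxE [RHS]mxE big_ord_recl /Emx.
case: (unliftP ord0 i) => [i'|] ->; case: (unliftP ord0 j) => [j'|] ->;
  rewrite !mxE ?liftK ?unlift_none /=.
- rewrite mul0r add0r mxE; apply: eq_bigr => k _.
  by rewrite !mxE !liftK.
- rewrite mul0r add0r big1 // => k _; by rewrite !mxE !liftK unlift_none mulr0.
- rewrite mul1r add0r big1 // => k _; by rewrite !mxE !liftK unlift_none mul0r.
- rewrite mul1r big1 ?addr0 // => k _; by rewrite !mxE !liftK unlift_none mul0r.
Qed.

Lemma Emx_1 n : Emx (1 : 'M[R]_n.+1) = 1.
Proof.
apply/matrixP => i j; rewrite [RHS]mxE /Emx.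
case: (unliftP ord0 i) => [i'|] ->; case: (unliftP ord0 j) => [j'|] ->;
  rewrite !mxE ?liftK ?unlift_none //=.
by rewrite mxE (inj_eq (@lift_inj _ ord0)).
Qed.

Lemma newton_m_shift (t : nat -> R) i j : (j <= i)%N ->
  newton_m t i.+1 j = newton_m (fun k => t k.+1) i j.
Proof.
move=> ji; rewrite /newton_m; apply: eq_big_nat => k /andP[k1 kj].
have -> : (i.+1 - k = (i - k).+1)%N by lia.
have -> : ((i - k).+1 - 1 = (i - k - 1).+1)%N by lia.
have -> : (i.+1.-1 = i.-1.+1)%N by lia.
by [].
Qed.

Lemma F_shift n (t : nat -> R) p : (1 <= p)%N ->
  newtonF n.+1 t p.+1 = Emx (newtonF n (fun k => t k.+1) p).
Proof.
move=> p1; apply/matrixP => i j; rewrite /Emx.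
case: (unliftP ord0 i) => [i'|] ->; case: (unliftP ord0 j) => [j'|] ->;
  rewrite !mxE ?liftK ?unlift_none /=.
- rewrite (inj_eq (@lift_inj _ ord0)) mxE /bump /= !add1n.
  case: (i' == j') => //; rewrite eqSS ltnS subSS.
  case: ifP => // _; rewrite newton_m_shift //; lia.
- rewrite /bump /= add1n; case: ifP => // /andP [/eqP H1 H2]; lia.
- by [].
- by [].
Qed.

Definition u (t : nat -> R) (i j : nat) : R :=
  if (j <= i)%N then \prod_(1 <= k < j.+1) ((t i.+1 - t k) / (t j.+1 - t k)) else 0.
Definition Umx n (t : nat -> R) : 'M[R]_n.+1 := \matrix_(i, j) u t i j.

Definition e (t : nat -> R) (i k : nat) : R :=
  if i == 0%N then (k == 0%N)%:R else if k == 0%N then 0 else u t i.-1 k.-1.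

Lemma Emx_nat n t (i k : 'I_n.+2) : Emx (Umx n t) i k = e t i k.
Proof.
rewrite /Emx /e.
case: (unliftP ord0 i) => [i'|] ->; case: (unliftP ord0 k) => [k'|] ->;
  rewrite !mxE ?liftK ?unlift_none /= ?lift0 //.
by rewrite mxE !add0n.
Qed.

Lemma sum_delta N (f : nat -> R) a :
  \sum_(k < N) f k * (k == a :> nat)%:R = if (a < N)%N then f a else 0.
Proof.
elim: N => [|N IH]; first by rewrite big_ord0.
rewrite big_ord_recr /= IH.
case: (ltngtP a N) => H.
- by rewrite ifT ?mulr0 ?addr0 //; lia.
- by rewrite ifF ?mulr0 ?addr0 //; lia.
- by rewrite H ltnSn mulr1 add0r.
Qed.

Lemma F1E n (t : nat -> R) (k j : 'I_n.+2) : newtonF n.+1 t 1 k j =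
  (k == j :> nat)%:R + (k == j.+1 :> nat)%:R * newton_m t j.+2 j.+1.
Proof.
rewrite mxE.
case: (eqVneq k j) => [->|ne].
  by rewrite eqxx (_ : (j == j.+1 :> nat) = false) ?mul0r ?addr0 //; lia.
have -> : (k == j :> nat) = false by apply/negbTE.
rewrite add0r; case: (eqVneq (k : nat) j.+1) => [->|ne2] /=.
  by rewrite mul1r subn1.
by rewrite mul0r.
Qed.

Lemma prod_neq0 (f : nat -> R) a b :
  (forall k, (a <= k < b)%N -> f k != 0) -> \prod_(a <= k < b) f k != 0.
Proof.
move=> H; apply/negP; rewrite prodf_seq_eq0 => /hasP [k].
rewrite mem_index_iota => /H Hk /= Hf.
by move: Hk; rewrite Hf.
Qed.

Lemma u_empty (t : nat -> R) i : u t i 0 = 1.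
Proof. by rewrite /u leq0n big_geq. Qed.

Lemma u_lt (t : nat -> R) i j : (i < j)%N -> u t i j = 0.
Proof. by move=> H; rewrite /u ifF //; lia. Qed.

Lemma u_diag (t : nat -> R) i : (forall k, (1 <= k <= i)%N -> t i.+1 != t k) -> u t i i = 1.
Proof.
move=> H; rewrite /u leqnn big_nat_cond big1 // => k /andP [Hk _].
by rewrite divff // subr_eq0; apply: H; lia.
Qed.

Lemma m_closed (t : nat -> R) J : newton_m t J.+2 J.+1 =
  (\prod_(1 <= k < J.+1) (t J.+2 - t k.+1)) / (\prod_(1 <= k < J.+1) (t J.+1 - t k)).
Proof.
rewrite /newton_m prodf_div; congr (_ / _); rewrite big_nat_rev /=;
  apply: eq_big_nat => k Hk; congr (_ - t _); lia.
Qed.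

Lemma key (t : nat -> R) N
  (ht : forall a b : nat, (1 <= a <= N.+1)%N -> (1 <= b <= N.+1)%N -> a != b -> t a != t b)
  (i j : nat) : (i <= N)%N -> (j <= N)%N ->
  u t i j = e (fun k => t k.+1) i j + e (fun k => t k.+1) i j.+1 * newton_m t j.+2 j.+1.
Proof.
move=> iN jN; rewrite /e.
case: i iN => [|i'] iN /=.
  case: j jN => [|j] jN; first by rewrite u_empty /= mul0r addr0.
  by rewrite u_lt // mul0r addr0.
case: j jN => [|j'] jN /=.
  by rewrite u_empty add0r u_empty mul1r /newton_m big_geq.
case: (ltngtP j' i') => H.
- set x := t i'.+2; set y := t j'.+2; set z := t j'.+3.
  set Xs := \prod_(1 <= k < j'.+1) (x - t k.+1).
  set Ys := \prod_(1 <= k < j'.+1) (y - t k.+1).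
  set Zs := \prod_(1 <= k < j'.+1) (z - t k.+1).
  have E1 : u t i'.+1 j'.+1 = (x - t 1)/(y - t 1) * (Xs / Ys).
    by rewrite /u ifT; [rewrite big_nat_recl // prodf_div | lia].
  have E2 : u (fun k => t k.+1) i' j' = Xs / Ys.
    by rewrite /u ifT; [rewrite prodf_div | lia].
  have E3 : u (fun k => t k.+1) i' j'.+1 = Xs / Zs * ((x - y)/(z - y)).
    by rewrite /u ifT; [rewrite big_nat_recr //= prodf_div | lia].
  have E4 : newton_m t j'.+3 j'.+2 = Zs * (z - y) / ((y - t 1) * Ys).
    by rewrite m_closed big_nat_recr //; congr (_ / _); rewrite big_nat_recl.
  have nz : forall a b, (1 <= a <= N.+1)%N -> (1 <= b <= N.+1)%N -> a != b -> t a - t b != 0.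
    by move=> a b Ha Hb Hab; rewrite subr_eq0; apply: ht.
  have Ysn : Ys != 0 by apply: prod_neq0 => k Hk; apply: nz; lia.
  have Zsn : Zs != 0 by apply: prod_neq0 => k Hk; apply: nz; lia.
  have zy : z - y != 0 by apply: nz; lia.
  have y1 : y - t 1 != 0 by apply: nz; lia.
  rewrite E1 E2 E3 E4; field.
  by rewrite Zsn zy y1 Ysn.
- by rewrite !u_lt ?mul0r ?addr0 //; lia.
- rewrite H u_diag; last by move=> k Hk; apply: ht; lia.
  rewrite u_diag; last by move=> k Hk; apply: ht; lia.
  by rewrite u_lt // mul0r addr0.
Qed.

Lemma U_step n (t : nat -> R)
  (ht : forall a b : nat, (1 <= a <= n.+2)%N -> (1 <= b <= n.+2)%N -> a != b -> t a != t b) :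
  Umx n.+1 t = Emx (Umx n (fun k => t k.+1)) * newtonF n.+1 t 1.
Proof.
apply/matrixP => i j; rewrite [LHS]mxE -mulmxE [RHS]mxE.
set m := newton_m t j.+2 j.+1.
set f := e (fun k => t k.+1) i.
rewrite (eq_bigr (fun k : 'I_n.+2 => f k * (k == j :> nat)%:R + f k * (k == j.+1 :> nat)%:R * m));
  last by move=> k _; rewrite Emx_nat F1E mulrDr mulrA.
rewrite big_split /= -mulr_suml !sum_delta ltn_ord.
rewrite (@key t n.+1 ht i j); last (by have := ltn_ord j; lia); last (by have := ltn_ord i; lia).
case: ifP => // Hj.
have -> : e (fun k => t k.+1) i j.+1 = 0.
  rewrite /e; case: ifP => // _; rewrite u_lt //. 
  have := ltn_ord i; have := ltn_ord j; lia.
by rewrite !mul0r.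
Qed.

Lemma mainU n (t : nat -> R)
  (ht : forall a b : nat, (1 <= a <= n.+1)%N -> (1 <= b <= n.+1)%N -> a != b -> t a != t b) :
  \prod_(p <- rev (iota 1 n)) newtonF n t p = Umx n t.
Proof.
elim: n t ht => [|n IH] t ht.
  rewrite big_nil; apply/matrixP => i j; rewrite !ord1 !mxE /= u_empty //.
rewrite (_ : rev (iota 1 n.+1) = rcons (map succn (rev (iota 1 n))) 1); last first.
  by rewrite /= rev_cons map_rev -(iotaDl 1 1).
rewrite big_rcons /= big_map.
rewrite (eq_big_seq (fun p => Emx (newtonF n (fun k => t k.+1) p))); last first.
  move=> p; rewrite mem_rev mem_iota => Hp; apply: F_shift; lia.
rewrite -(big_morph _ (@Emx_mul n) (Emx_1 n)) IH; last first.
  by move=> a b Ha Hb Hab; apply: ht; lia.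
by rewrite U_step.
Qed.

End Aux.

Theorem theorem2 (R : realFieldType) (n : nat) (t : nat -> R)
  (hn : (1 <= n)%N)
  (ht : forall i j : nat, (1 <= i <= n.+1)%N -> (1 <= j <= n.+1)%N ->
          i != j -> t i != t j) :
  newtonL n t =
  (\prod_(p <- rev (iota 1 n)) newtonF n t p) *m newtonD n t.
Proof.
rewrite mainU // /newtonD mul_mx_diag; apply/matrixP => i j; rewrite !mxE.
case: (leqP j i) => H.
  rewrite /u H prodf_div divfK //; apply: prod_neq0 => k Hk.
  rewrite subr_eq0; have := ltn_ord j; move=> Hj; apply: ht; lia.
rewrite u_lt // mul0r; apply/eqP; rewrite prodf_seq_eq0; apply/hasP.
exists i.+1; first by rewrite mem_index_iota; lia.
by rewrite /= subrr.
Qed.
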